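(* Let $A$ be a finite alphabet with $|A|=k$, and let $L\subseteq A^*$ be $n$-PT. Let $m=f_k(n)$. Then ${\downarrow}L$ and ${\downarrow}_<L$ are $(k+1)(m+1)$-PT.
   Context: For words $u,v$, $u\sqsubseteq v$ (subword) means $u=a_1\cdots a_\ell$ with letters $a_i$ and $v=v_0a_1v_1\cdots a_\ell v_\ell$ for some words $v_i$; $u\sqsubset v$ means $u\sqsubseteq v$ and $u\neq v$. ${\downarrow}L=\{v~|~\exists u\in L: v\sqsubseteq u\}$ and ${\downarrow}_<L=\{v~|~\exists u\in L: v\sqsubset u\}$. For $n\in\mathbb{N}$, $u\sim_n v$ iff $u$ and $v$ have exactly the same subwords of length at most $n$; $L$ is $n$-PT if it is a union of $\sim_n$-classes. The functions $f_k$ ($k\geq1$) are defined by $f_1(n)=n$ and $f_{k+1}(n)=\max_{0\leq m\leq n}\bigl(m f_k(n+1-m)+m+f_k(n-m)\bigr)$. *)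

(* Defs.v *)
From mathcomp Require Import all_boot.
Set Implicit Arguments. Unset Strict Implicit. Unset Printing Implicit Defensive.

(* Words over alphabet A are [seq A]; the subword relation u ⊑ v is
   mathcomp's [subseq u v] (scattered subsequence). Languages are
   predicates [seq A -> Prop]. *)

Definition strict_subword {A : eqType} (u v : seq A) : Prop :=
  subseq u v /\ u <> v.

Definition downclosure {A : eqType} (L : seq A -> Prop) : seq A -> Prop :=
  fun v => exists u, L u /\ subseq v u.

Definition sdownclosure {A : eqType} (L : seq A -> Prop) : seq A -> Prop :=
  fun v => exists u, L u /\ strict_subword v u.

Definition simon_eq {A : eqType} (n : nat) (u v : seq A) : Prop :=
  forall w : seq A, size w <= n -> (subseq w u <-> subseq w v).

(* L is n-PT: L is a union of ~_n classes, i.e. closed under ~_n *)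
Definition nPT {A : eqType} (n : nat) (L : seq A -> Prop) : Prop :=
  forall u v : seq A, simon_eq n u v -> (L u <-> L v).

(* f_1(n) = n,
   f_{k+1}(n) = max_{0<=m<=n} (m f_k(n+1-m) + m + f_k(n-m)).
   [fk k] encodes f_k for k >= 1; the value [fk 0] is an irrelevant
   placeholder (we set f_0 = f_1). *)
Fixpoint fk (k : nat) (n : nat) : nat :=
  match k with
  | 0 => n
  | 1 => n
  | k'.+1 => \max_(m < n.+1) (m * fk k' (n.+1 - m) + m + fk k' (n - m))
  end.

(* Main.v *)
Require Import Defs.
From mathcomp Require Import all_boot zify.
Set Implicit Arguments. Unset Strict Implicit. Unset Printing Implicit Defensive.

Lemma subseq_split (A : eqType) (w p r : seq A) :
  subseq w (p ++ r) -> exists w1 w2, w = w1 ++ w2 /\ subseq w1 p /\ subseq w2 r.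
Proof.
move=> /subseqP [m Hm ->].
exists (mask (take (size p) m) p), (mask (drop (size p) m) r).
rewrite -mask_cat; last by rewrite size_takel // Hm size_cat leq_addr.
by rewrite cat_take_drop !mask_subseq.
Qed.

Lemma subseq_cons_inv (A : eqType) (d : A) w b r :
  subseq (d :: w) (b :: r) -> (d = b /\ subseq w r) \/ subseq (d :: w) r.
Proof. by rewrite /=; case: eqP => [->|_] H; [left|right]. Qed.

Lemma subseq_tail (A : eqType) (d : A) w r : subseq (d :: w) r -> subseq w r.
Proof. by move=> H; apply: subseq_trans H; apply: subseq_cons. Qed.

Lemma simon_sym (A : eqType) n (u v : seq A) : simon_eq n u v -> simon_eq n v u.
Proof. by move=> H w Hw; split => /(H w Hw). Qed.

Lemma simon_refl (A : eqType) n (u : seq A) : simon_eq n u u.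
Proof. by []. Qed.

Lemma simon0 (A : eqType) (u v : seq A) : simon_eq 0 u v.
Proof. by move=> [|c w] //; rewrite !sub0seq. Qed.

Lemma simon_mem (A : eqType) n (u v : seq A) c :
  simon_eq n.+1 u v -> c \in u -> c \in v.
Proof. by move=> H; rewrite -!sub1seq; apply H. Qed.

Lemma simon_sub (A : eqType) n (u v w : seq A) :
  simon_eq n u v -> size w <= n -> subseq w u -> subseq w v.
Proof. by move=> H Hs; apply H. Qed.

Fixpoint word (A : Type) (z0 : seq A) (D : seq (A * seq A)) : seq A :=
  match D with [::] => z0 | (a, z) :: D' => z0 ++ a :: word z D' end.

Fixpoint pumpP (A : eqType) (z0 : seq A) (D : seq (A * seq A)) (y : seq A) : Prop :=
  match D with
  | [::] => all (mem z0) y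
  | (a, z) :: D' => exists p r, y = p ++ a :: r /\ all (mem z0) p /\ pumpP z D' r
  end.

Fixpoint fitsD (A : eqType) (z0 : seq A) (D : seq (A * seq A)) (v : seq A) : Prop :=
  match D with
  | [::] => all (mem z0) v
  | (a, z) :: D' => exists p r, v = p ++ r /\ all (mem z0) p /\
      ((exists r', r = a :: r' /\ fitsD z D' r') \/ fitsD z D' r)
  end.

Lemma all_mem_subseq (A : eqType) (P : pred A) (w v : seq A) :
  subseq w v -> all P v -> all P w.
Proof.
move=> /mem_subseq Hs /allP H; apply/allP => x /Hs; exact: H.
Qed.

Lemma fits_nil (A : eqType) D (z0 : seq A) : fitsD z0 D [::].
Proof.
elim: D z0 => [|[a z] D IH] z0 //=.
by exists [::], [::]; split => //; split => //; right.
Qed.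

Lemma fits_down (A : eqType) D (z0 : seq A) v w :
  subseq w v -> fitsD z0 D v -> fitsD z0 D w.
Proof.
elim: D z0 v w => [|[a z] D IH] z0 v w /=.
  by move=> Hs; apply: all_mem_subseq.
move=> Hs [p [r [Ev [Hp Hr]]]]; subst v.
have [w1 [w2 [-> [H1 H2]]]] := subseq_split Hs.
exists w1, w2; split => //; split; first exact: all_mem_subseq H1 Hp.
case: Hr => [[r' [Er Hr']]|Hr].
  subst r; case: w2 H2 => [|d w2] H2; first by right; apply fits_nil.
  case/subseq_cons_inv: H2 => [[-> H2]|H2].
    by left; exists w2; split => //; apply: IH Hr'.
  by right; apply: IH Hr'.
by right; apply: IH Hr.
Qed.

Lemma fits_word (A : eqType) D (z0 : seq A) u :
  subseq u (word z0 D) -> fitsD z0 D u.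
Proof.
elim: D z0 u => [|[a z] D IH] z0 u /=.
  by move=> Hs; apply: all_mem_subseq Hs _; apply/allP.
move=> /subseq_split [u1 [u2 [-> [H1 H2]]]].
exists u1, u2; split => //; split; first by apply: all_mem_subseq H1 _; apply/allP.
case: u2 H2 => [|d u2] H2; first by right; apply fits_nil.
case/subseq_cons_inv: H2 => [[-> H2]|H2].
  by left; exists u2; split => //; apply: IH.
by right; apply: IH.
Qed.

Lemma fits_pump (A : eqType) D (z0 : seq A) v :
  fitsD z0 D v -> exists y, pumpP z0 D y /\ subseq v y.
Proof.
elim: D z0 v => [|[a z] D IH] z0 v /=.
  by move=> H; exists v.
move=> [p [r [-> [Hp Hr]]]].
case: Hr => [[r' [-> Hr']]|Hr].
  have [y [Py Sy]] := IH _ _ Hr'.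
  exists (p ++ a :: y); split; first by exists p, y.
  by apply: cat_subseq => //=; rewrite eqxx.
have [y [Py Sy]] := IH _ _ Hr.
exists (p ++ a :: y); split; first by exists p, y.
apply: cat_subseq => //; apply: subseq_trans Sy _; apply: subseq_cons.
Qed.

Definition gaps (A : Type) (z0 : seq A) (D : seq (A * seq A)) : bool :=
  ~~ nilp z0 || has (fun p => ~~ nilp p.2) D.

Lemma all_mem_nil (A : eqType) (p : seq A) : all (mem [::]) p -> p = [::].
Proof. by case: p. Qed.

Lemma nogaps_pump (A : eqType) D (z0 : seq A) y :
  ~~ gaps z0 D -> pumpP z0 D y -> y = word z0 D.
Proof.
rewrite /gaps; elim: D z0 y => [|[a z] D IH] z0 y /=.
  by rewrite orbF negbK => /nilP -> /all_mem_nil.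
rewrite negb_or negb_or => /and3P [/negPn/nilP -> /negPn/nilP -> Hh].
move=> [p [r [-> [/all_mem_nil -> Hr]]]].
by rewrite (IH [::] r) // /gaps negb_or Hh andbT.
Qed.

Lemma nogaps_size (A : Type) D (z0 : seq A) :
  ~~ gaps z0 D -> size (word z0 D) = size D.
Proof.
rewrite /gaps; elim: D z0 => [|[a z] D IH] z0 /=.
  by rewrite orbF negbK => /nilP ->.
rewrite negb_or negb_or => /and3P [/negPn/nilP -> /negPn/nilP -> Hh].
by rewrite /= (IH [::]) // /gaps negb_or Hh.
Qed.

Lemma fits_pump_strict (A : eqType) D (z0 : seq A) v :
  gaps z0 D -> fitsD z0 D v -> exists y, pumpP z0 D y /\ subseq v y /\ size v < size y.
Proof.
elim: D z0 v => [|[a z] D IH] z0 v /=.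
  rewrite /gaps orbF; case: z0 => // c z0 _ H.
  exists (c :: v); split; first by rewrite /= H andbT inE eqxx.
  by split; [apply: subseq_cons|].
move=> Hg [p [r [Ev [Hp Hr]]]]; subst v.
case: z0 Hg Hp => [|c z0] Hg Hp.
  have Hg' : gaps z D by rewrite /gaps; move: Hg; rewrite /gaps /=.
  case: Hr => [[r' [-> Hr']]|Hr].
    have [y [Py [Sy Zy]]] := IH _ _ Hg' Hr'.
    exists (p ++ a :: y); split; first by exists p, y.
    split; first by apply: cat_subseq => //=; rewrite eqxx.
    by rewrite !size_cat /= ltn_add2l ltnS.
  have [y [Py [Sy Zy]]] := IH _ _ Hg' Hr.
  exists (p ++ a :: y); split; first by exists p, y.
  split; first by apply: cat_subseq => //; apply: subseq_trans Sy _; apply: subseq_cons.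
  by rewrite !size_cat /= ltn_add2l ltnS ltnW.
have [y [Py Sy]] := fits_pump (z0 := c :: z0) (D := (a, z) :: D) (v := p ++ r)
   (ex_intro _ p (ex_intro _ r (conj erefl (conj Hp Hr)))).
exists (c :: y); split.
  case: Py => [p' [r' [-> [Hp' Hr']]]]; exists (c :: p'), r'; split => //.
  by split => //=; rewrite mem_head.
by split; [apply: subseq_trans Sy _; apply: subseq_cons | rewrite /= ltnS size_subseq].
Qed.

Lemma split_prefix (A : eqType) (z0 : seq A) v :
  exists p r, v = p ++ r /\ all (mem z0) p /\ (r = [::] \/ exists c r', r = c :: r' /\ c \notin z0).
Proof.
elim: v => [|c v [p [r [-> [Hp Hr]]]]]; first by exists [::], [::]; split => //; split => //; left.
case Hc: (c \in z0).
  by exists (c :: p), r; split => //; split => //=; rewrite Hc.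
by exists [::], (c :: p ++ r); split => //; split => //; right; exists c, (p ++ r); rewrite Hc.
Qed.

Lemma fits_peel (A : eqType) (z0 : seq A) a z D c w :
  c \notin z0 -> fitsD z0 ((a, z) :: D) (c :: w) ->
  (c = a /\ fitsD z D w) \/ fitsD z D (c :: w).
Proof.
move=> Hc /= [p [r [Ev [Hp Hr]]]].
case: p Ev Hp => [|d p] /= Ev Hp; last first.
  by case: Ev => Ecd _; subst c; move: Hp Hc => /= /andP [Hd _] /negP Hn; exfalso; exact: Hn.
subst r; case: Hr => [[r' [[-> ->] H]]|H]; [by left | by right].
Qed.

Lemma fits_test (A : eqType) D (z0 : seq A) v :
  (forall w, subseq w v -> size w <= (size D).+1 -> fitsD z0 D w) -> fitsD z0 D v.
Proof.
elim: D z0 v => [|[a z] D IH] z0 v /= H.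
  apply/allP => c Hc.
  have := H [:: c]; rewrite sub1seq Hc /= => /(_ erefl erefl).
  by rewrite andbT.
have [p [r [Ev [Hp Hr]]]] := split_prefix z0 v.
exists p, r; split => //; split => //.
case: Hr => [->|[c [r' [Er Hc]]]]; first by right; apply fits_nil.
subst r v.
have Hsub : forall w, subseq (c :: w) (c :: r') -> subseq (c :: w) (p ++ c :: r').
  by move=> w Hw; rewrite -[c :: w]cat0s; apply: cat_subseq => //; apply: sub0seq.
case: (eqVneq c a) => [Eca|Nca].
  subst c; left; exists r'; split => //; apply: IH => w Hw Hs.
  have := H (a :: w) (Hsub _ _) Hs.
  rewrite /= eqxx => /(_ Hw).
  case/(fits_peel Hc) => [[_ //]|Hf]; apply: fits_down Hf; apply: subseq_cons.
right; apply: IH => w Hw Hs.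
case: w Hw Hs => [|d w] Hw Hs; first by apply fits_nil.
case/subseq_cons_inv: Hw => [[Edc Hw]|Hw].
  subst d.
  have := H (c :: w) (Hsub _ _) (leqW Hs).
  rewrite /= eqxx => /(_ Hw).
  by case/(fits_peel Hc) => [[Eca _]|//]; rewrite Eca eqxx in Nca.
have := H (c :: d :: w) (Hsub _ _) Hs.
rewrite /= eqxx => /(_ Hw).
case/(fits_peel Hc) => [[Eca _]|Hf]; first by rewrite Eca eqxx in Nca.
by apply: fits_down Hf; apply: subseq_cons.
Qed.

Definition univ (A : finType) (S : {set A}) j (X : seq A) : Prop :=
  forall w, all (mem S) w -> size w <= j -> subseq w X.

Lemma CS (A : finType) (S : {set A}) b (al al' Y X w : seq A) t j :
  all (mem S) (al ++ b :: Y) -> (forall c, c \in S -> c != b -> c \in al) ->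
  simon_eq t.+1 al al' -> simon_eq (t + j) Y X -> univ S j X ->
  subseq w (al ++ b :: Y) -> size w <= t + j.+1 -> subseq w (al' ++ b :: X).
Proof.
move=> HS Hal Ha HY HX Hw Hsz.
have wS : all (mem S) w by apply: all_mem_subseq Hw HS.
have [w1 [w2 [Ew [H1 H2]]]] := subseq_split Hw.
have Hsz' : size w1 + size w2 <= t + j.+1 by rewrite -size_cat -Ew.
case: (leqP (size w1) t.+1) => Hw1.
  have H1' : subseq w1 al' by apply: simon_sub Ha Hw1 H1.
  case: (leqP (size w2) (t + j)) => Hw2.
    rewrite Ew; apply: cat_subseq => //.
    case: w2 H2 Hw2 {Ew Hsz'} => [|d w3] H2 Hw2; first exact: sub0seq.
    case/subseq_cons_inv: H2 => [[-> H2]|H2].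
      by rewrite /= eqxx; apply: simon_sub HY _ H2; apply: leq_trans Hw2.
    by apply: subseq_trans (subseq_cons _ b); apply: simon_sub HY Hw2 H2.
  have E1 : size w1 = 0 by lia.
  move/size0nil: E1 => E1; subst w1; rewrite cat0s in Ew; subst w2.
  case: w H2 Hw2 Hsz' Hw wS {Hw1 H1 H1' Hsz} => [|d w3] H2 Hw2 Hsz' Hw wS; first exact: sub0seq.
  case/subseq_cons_inv: H2 => [[-> H2]|H2].
    rewrite -[b :: w3]cat0s; apply: cat_subseq; first exact: sub0seq.
    rewrite /= eqxx; apply: simon_sub HY _ H2; move: Hsz'; rewrite /=; lia.
  have dS : d \in S by move: wS => /= /andP [].
  case: (eqVneq d b) => [Edb|Ndb].
    subst d; rewrite -[b :: w3]cat0s; apply: cat_subseq; first exact: sub0seq.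
    rewrite /= eqxx; apply: simon_sub HY _ (subseq_tail H2).
    move: Hsz'; rewrite /=. lia.
  have dal : d \in al' by apply: simon_mem Ha (Hal _ dS Ndb).
  rewrite -[d :: w3]cat1s; apply: cat_subseq; first by rewrite sub1seq.
  apply: subseq_trans (subseq_cons _ b); apply: simon_sub HY _ (subseq_tail H2).
  move: Hsz'; rewrite /=; lia.
rewrite Ew -(cat_take_drop t.+1 w1) -catA; apply: cat_subseq.
  apply: simon_sub Ha _ (subseq_trans (take_subseq _ _) H1).
  by rewrite size_take; case: ltnP.
apply: subseq_trans (subseq_cons _ b); apply: HX.
  by apply: all_mem_subseq wS; rewrite Ew -{2}(cat_take_drop t.+1 w1) -catA; apply: suffix_subseq.
move: Hw1 Hsz'; rewrite size_cat size_drop; move: (size w1) (size w2) => a c; lia.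
Qed.

Fixpoint archw (A : Type) (s : seq (seq A * A)) (be : seq A) : seq A :=
  match s with [::] => be | (al, b) :: s' => al ++ b :: archw s' be end.

Lemma word_cat (A : Type) D (z0 : seq A) b z E :
  word z0 (D ++ (b, z) :: E) = word z0 D ++ b :: word z E.
Proof.
elim: D z0 => [|[a z1] D IH] z0 /= => //.

by rewrite IH -catA.
Qed.

Lemma pump_cat (A : eqType) D (z0 : seq A) b z E y :
  pumpP z0 (D ++ (b, z) :: E) y ->
  exists y1 y2, y = y1 ++ b :: y2 /\ pumpP z0 D y1 /\ pumpP z E y2.
Proof.
elim: D z0 y => [|[a z1] D IH] z0 y /=.
  by move=> [p [r [-> [Hp Hr]]]]; exists p, r.
move=> [p [r [-> [Hp Hr]]]].
have [y1 [y2 [-> [H1 H2]]]] := IH _ _ Hr.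
exists (p ++ a :: y1), y2; split; first by rewrite -catA.
by split => //; exists p, y1.
Qed.

Lemma pump_sub (A : eqType) D (z0 : seq A) y :
  pumpP z0 D y -> {subset y <= word z0 D}.
Proof.
elim: D z0 y => [|[a z] D IH] z0 y /=.
  by move=> /allP H x /H.
move=> [p [r [-> [Hp Hr]]]] x.
rewrite !mem_cat !inE => /orP [Hx|/orP [Hx|Hx]].
- by apply/orP; left; exact: (allP Hp x Hx).
- by rewrite Hx orbT.
- by rewrite (IH _ _ Hr x Hx) !orbT.
Qed.

Lemma archw_univ (A : finType) (S : {set A}) s be :
  (forall p, p \in s -> forall c, c \in S -> c \in p.1 ++ [:: p.2]) ->
  univ S (size s) (archw s be).
Proof.
elim: s => [|[al b] s IH] H w wS Hw /=.
  by case: w wS Hw => // *; exact: sub0seq.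
case: w wS Hw => [|c w] wS Hw; first exact: sub0seq.
move: wS Hw => /= /andP [cS wS] Hw.
have Hc := H _ (mem_head _ _) c cS.
rewrite -cat1s -[al ++ b :: _]/(al ++ [:: b] ++ archw s be) catA.
apply: cat_subseq; first by rewrite sub1seq.
apply: IH => [p Hp||//]; [by apply: H; rewrite inE Hp orbT|exact: wS].
Qed.

Lemma archw_all (A : finType) (S : {set A}) s be :
  all (mem S) be -> (forall p, p \in s -> p.2 \in S /\ all (mem S) p.1) -> all (mem S) (archw s be).
Proof.
move=> Hbe; elim: s => [|[al b] s IH] H //=.
have [/= bS /= alS] := H _ (mem_head _ _).
rewrite all_cat alS /= bS /=; apply: IH => p Hp; by apply: H; rewrite inE Hp orbT.
Qed.

Lemma all_cat_inv (A : Type) (P : pred A) u v : all P (u ++ v) = all P u && all P v.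
Proof. exact: all_cat. Qed.

Lemma chain (A : finType) (S : {set A}) t A1 A2 s be :
  (forall p, p \in s -> [/\ p.2 \in S, all (mem S) p.1,
       (forall c, c \in S -> c != p.2 -> c \in p.1) &
       exists z0 D, [/\ word z0 D = p.1, size D <= A1 &
           forall y, pumpP z0 D y -> simon_eq t.+1 y p.1]]) ->
  all (mem S) be ->
  (exists z0 D, [/\ word z0 D = be, size D <= A2 &
           forall y, pumpP z0 D y -> simon_eq t y be]) ->
  exists z0 D, [/\ word z0 D = archw s be, size D <= size s * A1 + size s + A2 &
      forall y, pumpP z0 D y -> simon_eq (t + size s) y (archw s be)].
Proof.
move=> Hs Hbe Hb.
have Hall : all (mem S) (archw s be).
  by apply: archw_all Hbe _ => p /Hs [].
elim: s Hs Hall => [|[al b] s IH] Hs Hall.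
  case: Hb => z0 [D [E1 E2 E3]]; exists z0, D; split => //=.
  by rewrite addn0.
have Hs' := (fun p (Hp : p \in s) => Hs p ltac:(by rewrite inE Hp orbT)).
have [bS alS Hal [z0 [D [Ew HD Hp]]]] := Hs _ (mem_head _ _).
rewrite /= all_cat /= in Hall; case/and3P: Hall => _ _ Hall.
have [z1 [D1 [Ew1 HD1 Hp1]]] := IH Hs' Hall.
exists z0, (D ++ (b, z1) :: D1); split.
- by rewrite word_cat Ew Ew1.
- rewrite size_cat /= mulSn; move: HD HD1; move: (size D) (size D1) (size s * A1) (size s) => a1 a2 a3 a4; lia.
move=> y /pump_cat [y1 [y2 [-> [P1 P2]]]].
have E1 := Hp _ P1; have E2 := Hp1 _ P2.
have Hu : univ S (size s) (archw s be).
  apply: archw_univ => p Hp0 c cS; have [pS _ Hc _] := Hs' p Hp0.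
  rewrite mem_cat; case: (eqVneq c p.2) => [->|Nc]; first by rewrite inE eqxx orbT.
  by rewrite Hc.
have Hu2 : univ S (size s) y2.
  move=> w wS sw; apply: (simon_sub (simon_sym E2)); first by apply: leq_trans sw (leq_addl _ _).
  exact: Hu.
have y1S : all (mem S) y1.
  apply/allP => x /(pump_sub P1); rewrite Ew => /(allP alS); exact.
have y2S : all (mem S) y2.
  apply/allP => x /(pump_sub P2); rewrite Ew1 => /(allP Hall); exact.
have Hal1 : forall c, c \in S -> c != b -> c \in y1.
  by move=> c cS Nc; apply: simon_mem (simon_sym E1) _; apply: Hal.
rewrite /= => w Hw; split => H.
- have HS1 : all (mem S) (y1 ++ b :: y2) by rewrite all_cat y1S /= bS.
  exact: (CS HS1 Hal1 E1 E2 Hu H Hw).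
- have HS2 : all (mem S) (al ++ b :: archw s be) by rewrite all_cat alS /= bS Hall.
  exact: (CS HS2 Hal (simon_sym E1) (simon_sym E2) Hu2 H Hw).
Qed.

Lemma arch_split (A : finType) (y : seq A) (T : {set A}) :
  T != set0 -> (forall c, c \in T -> c \in y) ->
  exists al b y', [/\ y = al ++ b :: y', b \in T, b \notin al &
     forall c, c \in T -> c != b -> c \in al].
Proof.
elim: y T => [|d y IH] T HT Hy.
  by case/set0Pn: HT => c /Hy.
case: (eqVneq (T :\ d) set0) => Hd.
  exists [::], d, y; split => //.
  - case/set0Pn: HT => c cT; case: (eqVneq c d) => [<-//|Ncd].
    have : c \in T :\ d by rewrite in_setD1 Ncd cT.
    by rewrite Hd inE.
  - move=> c cT Ncd; have : c \in T :\ d by rewrite in_setD1 Ncd cT.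
    by rewrite Hd inE.
have Hy' : forall c, c \in T :\ d -> c \in y.
  move=> c; rewrite in_setD1 => /andP [Ncd cT]; move: (Hy c cT).
  by rewrite inE (negbTE Ncd).
have [al [b [y' [-> bT bal Hal]]]] := IH _ Hd Hy'.
exists (d :: al), b, y'; split => //.
- by move: bT; rewrite in_setD1 => /andP [].
- by rewrite inE negb_or bal andbT; move: bT; rewrite in_setD1 => /andP [].

- move=> c cT Ncb; rewrite inE; case: (eqVneq c d) => //= Ncd.
  by apply: Hal => //; rewrite in_setD1 Ncd cT.
Qed.

Lemma arch_dec (A : finType) (S : {set A}) M y :
  S != set0 -> all (mem S) y ->
  exists s be, [/\ y = archw s be, size s <= M,
     (size s = M \/ exists c, c \in S /\ c \notin be) &
     forall p, p \in s -> [/\ p.2 \in S, all (mem S) p.1, p.2 \notin p.1 &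
        forall c, c \in S -> c != p.2 -> c \in p.1]].
Proof.
move=> HS; elim: M y => [|M IH] y Hy.
  by exists [::], y; split => //; left.
case: (boolP [forall c in S, c \in y]) => Hall.
  have [al [b [y' [Ey bS bal Hal]]]] := arch_split HS (fun c cS => (forall_inP Hall) c cS).
  move: Hy; rewrite Ey all_cat /= => /and3P [alS _ y'S].
  have [s [be [Ey' Hs Hc Hp]]] := IH y' y'S.
  exists ((al, b) :: s), be; split => //.
  - by rewrite Ey'.
  - by case: Hc => [Hc|Hc]; [left; rewrite /= Hc|right].
  - move=> p; rewrite inE => /orP [/eqP ->|/Hp //]; by split.
move/forall_inPn: Hall => [c cS cy].
exists [::], y; split => //; right; exists c; split => //.
Qed.

Definition hk (k n : nat) := if k is 0 then 0 else fk k n.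

Lemma hk_step k n m : m <= n -> m * hk k (n - m).+1 + m + hk k (n - m) <= hk k.+1 n.
Proof.
case: k => [|k] Hm /=; first by rewrite muln0 addn0.
have Hm' : m < n.+1 by [].
have := @leq_bigmax _ (fun i : 'I_n.+1 => i * fk k.+1 (n.+1 - i) + i + fk k.+1 (n - i)) (Ordinal Hm').
by rewrite /= subSn.
Qed.

Lemma nil_dec (A : eqType) N :
  exists z0 D, [/\ word z0 D = [::] :> seq A, size D <= N &
      forall y, pumpP z0 D y -> forall n, simon_eq n y [::]].
Proof.
by exists [::], [::]; split => // y /= /all_mem_nil ->.
Qed.

Lemma all_archw (A : finType) (S : {set A}) s be :
  all (mem S) (archw s be) -> all (mem S) be.
Proof. by elim: s => [|[al b] s IH] //= ; rewrite all_cat => /andP [_ /andP [_ /IH]]. Qed.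

Lemma card_del (A : finType) (S : {set A}) b k :
  b \in S -> #|S| <= k.+1 -> #|S :\ b| <= k.
Proof. by move=> bS; rewrite (cardsD1 b S) bS. Qed.

Lemma all_del (A : finType) (S : {set A}) b (al : seq A) :
  all (mem S) al -> b \notin al -> all (mem (S :\ b)) al.
Proof.
move=> /allP H bal; apply/allP => x xal; rewrite /= in_setD1; apply/andP; split; last exact: H.
by apply/eqP => Exb; subst x; rewrite xal in bal.
Qed.

Lemma SP (A : finType) k : forall (S : {set A}), #|S| <= k -> forall n y, all (mem S) y ->
  exists z0 D, [/\ word z0 D = y, size D <= hk k n &
     forall y', pumpP z0 D y' -> simon_eq n y' y].
Proof.
elim: k => [|k IH] S HS n y Hy.
  have E : S = set0 by apply: cards0_eq; move: HS; rewrite leqn0 => /eqP.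
  subst S; have -> : y = [::] by case: y Hy => // c y; rewrite /= inE.
  by have [z0 [D [E1 E2 E3]]] := nil_dec A (hk 0 n); exists z0, D; split => // y' /E3.
case: (eqVneq S set0) => [E|HS0].
  subst S; have -> : y = [::] by case: y Hy => // c y; rewrite /= inE.
  by have [z0 [D [E1 E2 E3]]] := nil_dec A (hk k.+1 n); exists z0, D; split => // y' /E3.
have [s [be [Ey Hs Hc Hp]]] := arch_dec n HS0 Hy.
have Hbe : all (mem S) be by move: Hy; rewrite Ey; apply: all_archw.
have := @chain A S (n - size s) (hk k (n - size s).+1) (hk k (n - size s)) s be _ Hbe _.
case.
- move=> p /Hp [bS alS bal Hal]; split => //.
  exact: IH (S :\ p.2) (card_del bS HS) _ _ (all_del alS bal).
- case: Hc => [Es|[c [cS cbe]]].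
    rewrite Es subnn; exists be, [::]; split => // y' _; exact: simon0.
  apply: IH (S :\ c) (card_del cS HS) _ _ (all_del Hbe cbe).
- move=> z0 [D [E1 E2 E3]]; exists z0, D; split.
  + by rewrite E1.
  + by apply: leq_trans E2 _; apply: hk_step.
  + by move=> y' /E3; rewrite subnK // -Ey.
Qed.

Lemma transfer (A : eqType) N (u v y : seq A) z0 D :
  simon_eq N u v -> subseq u y -> word z0 D = y -> (size D).+1 <= N -> fitsD z0 D v.
Proof.
move=> Huv Huy Ew HN; apply: fits_test => w Hw Hs.
have Hwu : subseq w u by apply (Huv w (leq_trans Hs HN)).
apply: fits_down Hwu _; apply: fits_word; by rewrite Ew.
Qed.

Theorem theorem15 (A : finType) (k n : nat) (L : seq A -> Prop) :
  0 < k -> #|A| = k -> nPT n L ->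
  let m := fk k n in
  nPT ((k + 1) * (m + 1)) (downclosure L) /\
  nPT ((k + 1) * (m + 1)) (sdownclosure L).
Proof.
move=> Hk HA HL m.
set N := (k + 1) * (m + 1).
have key : forall y : seq A, exists z0 D, [/\ word z0 D = y, size D <= m &
     forall y', pumpP z0 D y' -> simon_eq n y' y].
  move=> y.
  have HS : #|[set: A]| <= k by rewrite cardsT HA.
  have Hy : all (mem [set: A]) y by apply/allP => x _; rewrite inE.
  have [z0 [D [E1 E2 E3]]] := SP HS n Hy.
  exists z0, D; split => //; move: E2; rewrite /hk /m; case: (k) Hk => //.
have HN : forall D : seq (A * seq A), size D <= m -> (size D).+1 <= N.
  move=> D HD; apply: leq_trans (_ : m + 1 <= N); first by rewrite addn1.
  by rewrite /N leq_pmull // addn1.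
have down1 : forall u v : seq A, simon_eq N u v -> downclosure L u -> downclosure L v.
  move=> u v Huv [y [Ly Huy]].
  have [z0 [D [E1 E2 E3]]] := key y.
  have Hf := transfer Huv Huy E1 (HN _ E2).
  have [y' [Py Sy]] := fits_pump Hf.
  by exists y'; split => //; apply/(HL y' y (E3 _ Py)).
have sdown1 : forall u v : seq A, simon_eq N u v -> sdownclosure L u -> sdownclosure L v.
  move=> u v Huv [y [Ly [Huy Nuy]]].
  have [z0 [D [E1 E2 E3]]] := key y.
  have Hf := transfer Huv Huy E1 (HN _ E2).
  case Hg: (gaps z0 D).
    have [y' [Py [Sy Zy]]] := fits_pump_strict Hg Hf.
    exists y'; split; first by apply/(HL y' y (E3 _ Py)).
    by split => // Evy; rewrite Evy ltnn in Zy.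
  have [y' [Py Sy]] := fits_pump Hf.
  have Ey' := nogaps_pump (negbT Hg) Py; rewrite E1 in Ey'; subst y'.
  exists y; split => //; split => // Evy; subst v.
  have Hsz : size y <= N by rewrite -E1 nogaps_size ?negbT // ltnW // HN.
  have Hyu : subseq y u by apply (Huv y Hsz).
  have Hlt : size u < size y.
    have := size_subseq_leqif Huy; case => Hle Heq.
    by rewrite ltn_neqAle Hle andbT Heq; apply/eqP.
  by have := size_subseq Hyu; rewrite leqNgt Hlt.
split => u v Huv; split.
- exact: down1 Huv.
- exact: down1 (simon_sym Huv).
- exact: sdown1 Huv.
- exact: sdown1 (simon_sym Huv).
Qed.
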